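(* Let $A$ be an integral domain. If the polynomial $a_0+a_1x+\cdots+a_nx^n\in A[x]$ is divisible by $p^m$, where $p\in A[x]$ and $m\in\mathbb{N}$, then for all $z_1,z_2\in\mathbb{Z}$ and every $k\in\mathbb{N}$ with $k\le m$, the polynomial $\sum_{r=0}^n\binom{z_1+z_2r}{k}a_rx^r\in A[x]$ is divisible by $p^{m-k}$.
   Context: $\binom{z}{k}=z(z-1)\cdots(z-k+1)/k!$ for $z\in\mathbb{Z}$, $k\in\mathbb{N}$ (an integer). *)

(* Defs.v *)
From HB Require Import structures.
From mathcomp Require Import all_boot all_order all_algebra.
Set Implicit Arguments. Unset Strict Implicit. Unset Printing Implicit Defensive.
Import Order.TTheory GRing.Theory Num.Theory.
Local Open Scope ring_scope.

(* Generalized binomial coefficient binom(z, k) = z(z-1)...(z-k+1)/k!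
   for z : int, k : nat; the division is exact integer division. *)
Definition zbinom (z : int) (k : nat) : int :=
  ((\prod_(i < k) (z - i%:Z)) %/ (k`!)%:Z)%Z.

(* Divisibility in the polynomial ring A[x] (genuine divisibility,
   not polydiv's pseudo-divisibility). *)
Definition poly_dvd (A : idomainType) (p q : {poly A}) : Prop :=
  exists r : {poly A}, q = r * p.

(* Main.v *)
Require Import Defs.
From HB Require Import structures.
From mathcomp Require Import all_boot all_order all_algebra.
From mathcomp Require Import zify ring.
Import Order.TTheory GRing.Theory Num.Theory.
Local Open Scope ring_scope.

Section Dvd.
Variable A : idomainType.
Implicit Types u v q w : {poly A}.

Lemma pdvd_refl q : poly_dvd q q.
Proof. by exists 1; rewrite mul1r. Qed.
Lemma pdvd0 q : poly_dvd q 0.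
Proof. by exists 0; rewrite mul0r. Qed.
Lemma pdvdD q u v : poly_dvd q u -> poly_dvd q v -> poly_dvd q (u + v).
Proof. by move=> [r1 ->] [r2 ->]; exists (r1 + r2); rewrite mulrDl. Qed.
Lemma pdvdMl q u w : poly_dvd q u -> poly_dvd q (w * u).
Proof. by move=> [r ->]; exists (w * r); rewrite mulrA. Qed.
Lemma pdvdMz q u (c : int) : poly_dvd q u -> poly_dvd q (u *~ c).
Proof. by move=> [r ->]; exists (r *~ c); rewrite mulrzAl. Qed.
Lemma pdvd_trans q u v : poly_dvd q u -> poly_dvd u v -> poly_dvd q v.
Proof. by move=> [r1 ->] [r2 ->]; exists (r2 * r1); rewrite mulrA. Qed.
Lemma pdvd_sum (I : Type) (r : seq I) (P : pred I) F q :
  (forall i, P i -> poly_dvd q (F i)) -> poly_dvd q (\sum_(i <- r | P i) F i).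
Proof.
move=> H; apply: (big_ind (poly_dvd q)) => //; [exact: pdvd0| exact: pdvdD].
Qed.
Lemma pdvd_exp (p : {poly A}) a b : (a <= b)%N -> poly_dvd (p ^+ a) (p ^+ b).
Proof. by move=> le; exists (p ^+ (b - a)); rewrite -exprD subnK. Qed.
End Dvd.

Section Hasse.
Variable A : idomainType.
Variable p : {poly A}.

Definition Ip (m : nat) (u : {poly {poly A}}) :=
  forall j, poly_dvd (p ^+ (m - j)) u`_j.

Lemma Ip0 u : Ip 0 u.
Proof. by move=> j; rewrite sub0n expr0; exists u`_j; rewrite mulr1. Qed.

Lemma IpM a b u v : Ip a u -> Ip b v -> Ip (a + b) (u * v).
Proof.
move=> Hu Hv j; rewrite coefM; apply: pdvd_sum => i _.
have [r1 ->] := Hu i; have [r2 ->] := Hv (j - i)%N.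
have lij : (i <= j)%N by rewrite -ltnS ltn_ord.
exists (r1 * r2 * p ^+ ((a - i) + (b - (j - i)) - (a + b - j))).
rewrite -mulrA -exprD subnK; last by lia.
by rewrite exprD; ring.
Qed.

Lemma IpX w m : Ip 1 w -> Ip m (w ^+ m).
Proof.
move=> H; elim: m => [|m IH]; first exact: Ip0.
by rewrite exprS -add1n; apply: IpM.
Qed.

Definition Tay (g : {poly A}) : {poly {poly A}} := (g^:P^:P).[('X)%:P + 'X].

Lemma TayE g : Tay g = \poly_(i < size g) g^`N(i).
Proof.
rewrite /Tay nderiv_taylor; last exact: mulrC.
rewrite poly_def !size_map_polyC; apply: eq_bigr => i _.
rewrite !nderivn_map horner_map /= -/(comp_poly 'X _) comp_polyXr.
by rewrite mul_polyC.
Qed.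

Lemma Tay_coef g j : (Tay g)`_j = g^`N(j).
Proof.
rewrite TayE coef_poly; case: ltnP => // H.
by rewrite nderivn_poly0.
Qed.

Lemma TayM u v : Tay (u * v) = Tay u * Tay v.
Proof. by rewrite /Tay !rmorphM /= hornerM. Qed.
Lemma TayX u m : Tay (u ^+ m) = Tay u ^+ m.
Proof. by rewrite /Tay !rmorphXn /= horner_exp. Qed.

Lemma hasse m f : poly_dvd (p ^+ m) f ->
  forall j, poly_dvd (p ^+ (m - j)) (f^`N(j)).
Proof.
move=> [q ->] j; rewrite -Tay_coef TayM TayX.
have H1 : Ip 1 (Tay p).
  move=> [|i]; last by rewrite subSS sub0n expr0; exists (Tay p)`_i.+1; rewrite mulr1.
  by rewrite Tay_coef nderivn0 subn0 expr1; apply: pdvd_refl.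
by have := IpM _ _ _ _ (Ip0 (Tay q)) (IpX _ m H1); rewrite add0n; apply.
Qed.
End Hasse.
Lemma dvdzDx (d a b : int) : (d %| a)%Z -> (d %| b)%Z -> (d %| a + b)%Z.
Proof.
move=> /dvdzP [x ->] /dvdzP [y ->]; apply/dvdzP; exists (x + y); ring.
Qed.
Lemma dvdzBx (d a b : int) : (d %| a)%Z -> (d %| b)%Z -> (d %| a - b)%Z.
Proof.
move=> /dvdzP [x ->] /dvdzP [y ->]; apply/dvdzP; exists (x - y); ring.
Qed.

Definition Pz (k : nat) (z : int) : int := \prod_(i < k) (z - i%:Z).

Lemma Pz_step k z : Pz k.+1 (z + 1) - Pz k.+1 z = k.+1%:Z * Pz k z.
Proof.
rewrite /Pz big_ord_recl big_ord_recr /=.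
have -> : \prod_(i < k) (z + 1 - (lift ord0 i : nat)%:Z) = \prod_(i < k) (z - i%:Z).
  by apply: eq_bigr => i _; rewrite lift0 intS; ring.
have -> : \prod_(i < k) (z - (widen_ord (leqnSn k) i : nat)%:Z) = \prod_(i < k) (z - i%:Z).
  by [].
rewrite intS; ring.
Qed.

Lemma Pz0 k : Pz k.+1 0 = 0.
Proof. by rewrite /Pz big_ord_recl /= subr0 mul0r. Qed.

Lemma Pz_dvd k z : ((k`!)%:Z %| Pz k z)%Z.
Proof.
elim: k z => [|k IH] z; first by rewrite fact0 dvd1z.
have Hs : forall w, ((k.+1`!)%:Z %| k.+1%:Z * Pz k w)%Z.
  by move=> w; rewrite factS PoszM; apply: dvdz_mul; [apply: dvdzz | apply: IH].
elim/int_ind: z => [|n Hn|n Hn]; first by rewrite Pz0 dvdz0.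
  have -> : (n.+1 : int) = n%:Z + 1 by rewrite intS addrC.
  have -> : Pz k.+1 (n%:Z + 1) = Pz k.+1 n + k.+1%:Z * Pz k n.
    by rewrite -Pz_step; ring.
  by apply: dvdzDx.
have -> : Pz k.+1 (- n.+1%:Z) = Pz k.+1 (- n.+1%:Z + 1) - k.+1%:Z * Pz k (- n.+1%:Z).
  by rewrite -Pz_step; ring.
have -> : - n.+1%:Z + 1 = - n%:Z by rewrite intS; ring.
by apply: dvdzBx.
Qed.

Lemma zbinomE k z : zbinom z k * (k`!)%:Z = Pz k z.
Proof. by rewrite /zbinom divzK //; apply: Pz_dvd. Qed.

Lemma zbinom0 z : zbinom z 0 = 1.
Proof. by rewrite /zbinom big_ord0 fact0 divz1. Qed.

Lemma pascal k z : zbinom (z + 1) k.+1 = zbinom z k.+1 + zbinom z k.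
Proof.
have nz : (k.+1`!)%:Z != 0 by rewrite eqz_nat -lt0n fact_gt0.
apply: (mulIf nz) => /=; rewrite mulrDl !zbinomE.
rewrite factS PoszM mulrA [_ * k.+1%:Z]mulrC -mulrA zbinomE.
by rewrite -Pz_step; ring.
Qed.

Lemma tele k u (n : nat) :
  zbinom (u + n%:Z) k.+1 - zbinom u k.+1 = \sum_(s < n) zbinom (u + s%:Z) k.
Proof.
elim: n => [|n IH]; first by rewrite big_ord0 addr0 subrr.
rewrite big_ord_recr /= -IH intS (addrC 1) addrA pascal; ring.
Qed.

Definition Sp (k : nat) (g : nat -> int) :=
  exists c : nat -> int, forall r, g r = \sum_(j < k.+1) c j * ('C(r, j))%:Z.

Lemma Sp_ext k g h : (forall r, g r = h r) -> Sp k g -> Sp k h.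
Proof. by move=> E [c Hc]; exists c => r; rewrite -E. Qed.

Arguments Sp_ext [k g h].
Lemma Sp_add k g h : Sp k g -> Sp k h -> Sp k (fun r => g r + h r).
Proof.
move=> [c Hc] [d Hd]; exists (fun j => c j + d j) => r.
by rewrite Hc Hd -big_split; apply: eq_bigr => j _; rewrite mulrDl.
Qed.

Arguments Sp_add [k g h].
Lemma Sp_opp k g : Sp k g -> Sp k (fun r => - g r).
Proof.
move=> [c Hc]; exists (fun j => - c j) => r.
by rewrite Hc -sumrN; apply: eq_bigr => j _; rewrite mulNr.
Qed.

Arguments Sp_opp [k g].
Lemma Sp_zero k : Sp k (fun _ => 0).
Proof. by exists (fun _ => 0) => r; rewrite big1 // => j _; rewrite mul0r. Qed.

Lemma Sp_sum k (n : nat) (g : nat -> nat -> int) :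
  (forall s, Sp k (g s)) -> Sp k (fun r => \sum_(s < n) g s r).
Proof.
move=> H; elim: n => [|n IH].
  by apply: Sp_ext (Sp_zero k) => r; rewrite big_ord0.
apply: Sp_ext (Sp_add IH (H n)) => r; by rewrite big_ord_recr.
Qed.

Arguments Sp_sum [k] n [g].
Lemma Sp_const c : Sp 0 (fun _ => c).
Proof. by exists (fun _ => c) => r; rewrite big_ord1 bin0 mulr1. Qed.

Lemma Sp_lift k g : Sp k (fun r => g r.+1 - g r) -> Sp k.+1 g.
Proof.
move=> [c Hc]; exists (fun j => if j is j'.+1 then c j' else g 0%N) => r.
rewrite big_ord_recl /= bin0 mulr1.
elim: r => [|r IH].
  by rewrite big1 ?addr0 // => j _; rewrite bin0n /= mulr0.
have -> : g r.+1 = g r + (g r.+1 - g r) by ring.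
rewrite Hc IH -addrA -big_split /=; congr (_ + _); apply: eq_bigr => j _.
by rewrite /bump /= binS PoszD mulrDr.
Qed.

Lemma Sp_binom k : forall c d : int, Sp k (fun r => zbinom (c + d * r%:Z) k).
Proof.
elim: k => [|k IH] c d.
  by apply: Sp_ext (Sp_const 1) => r; rewrite zbinom0.
apply: Sp_lift.
case: d => n.
- apply: Sp_ext (Sp_sum n (g:=fun s r => zbinom ((c + s%:Z) + n%:Z * r%:Z) k) (fun s => IH _ _)) => r.
  have -> : c + n%:Z * r.+1%:Z = (c + n%:Z * r%:Z) + n%:Z by rewrite intS; ring.
  by rewrite tele; apply: eq_bigr => s _; congr zbinom; ring.
- apply: Sp_ext (Sp_opp (Sp_sum n.+1 (g:=fun s r => zbinom ((c + Negz n + s%:Z) + Negz n * r%:Z) k) (fun s => IH _ _))) => r.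
  have -> : c + Negz n * r%:Z = (c + Negz n * r.+1%:Z) + n.+1%:Z by rewrite NegzE intS; ring.
  rewrite -opprB tele; congr (- _); apply: eq_bigr => s _; congr zbinom; rewrite NegzE intS; ring.
Qed.

Theorem lemma4p1 (A : idomainType) (n : nat) (a : nat -> A)
    (p : {poly A}) (m : nat) :
  poly_dvd (p ^+ m) (\sum_(r < n.+1) (a r)%:P * 'X^r) ->
  forall (z1 z2 : int) (k : nat), (k <= m)%N ->
    poly_dvd (p ^+ (m - k))
      (\sum_(r < n.+1) (((zbinom (z1 + z2 * r%:Z) k)%:~R * a r)%:P * 'X^r)).
Proof.
move=> Hf z1 z2 k Hk.
have Hpoly : forall F : nat -> A,
    \sum_(r < n.+1) (F r)%:P * 'X^r = \poly_(r < n.+1) F r.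
  by move=> F; rewrite poly_def; apply: eq_bigr => r _; rewrite mul_polyC.
rewrite Hpoly in Hf.
set f := \poly_(r < n.+1) a r in Hf.
have [c Hc] := Sp_binom k z1 z2.
rewrite (Hpoly (fun r => (zbinom (z1 + z2 * r%:Z) k)%:~R * a r)).
have -> : \poly_(r < n.+1) ((zbinom (z1 + z2 * r%:Z) k)%:~R * a r)
   = \sum_(j < k.+1) ('X^j * f^`N(j)) *~ c j.
  apply/polyP => i.
  rewrite coef_poly coef_sum.
  have Ht : forall j : nat, ('X^j * f^`N(j))`_i *~ c j = f`_i *~ (c j * ('C(i, j))%:Z).
    move=> j; rewrite coefXnM; case: ltnP => h.
      by rewrite bin_small // mulr0 mul0rz mulr0z.
    by rewrite coef_nderivn subnKC // pmulrn -mulrzA mulrC.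
  under eq_bigr => j _ do rewrite coefMrz Ht.
  rewrite -mulrz_sumr -Hc /f coef_poly.
  by case: ifP => _; [rewrite mulrzl | rewrite mul0rz].
apply: pdvd_sum => j _.
apply: pdvdMz; apply: pdvdMl.
apply: (pdvd_trans _ _ (p ^+ (m - j)) _ _ (hasse _ _ _ _ Hf j)).
apply: pdvd_exp.
have := ltn_ord j; lia.
Qed.
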